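(* For any $0<\theta<1$, the Assouad spectrum $\dim_A^\theta$ is not stable with respect to graph sums: there exist continuous functions $g,h$ defined on a common interval $I$ such that $$\dim_A^\theta(\operatorname{Graph}(g+h))>\max\{\dim_A^\theta(\operatorname{Graph}(g)),\dim_A^\theta(\operatorname{Graph}(h))\}.$$
   Context: A notion of dimension $D$ is called stable with respect to graph sums if $D(\operatorname{Graph}(g+h))\le\max\{D(\operatorname{Graph}(g)),D(\operatorname{Graph}(h))\}$ for all continuous functions $g,h$ defined on a common interval $I$, where $\operatorname{Graph}(g)=\{(t,g(t)):t\in I\}$. For a bounded $F\subset\mathbb{R}^2$ and $r>0$, $N(F,r)$ is the least number of sets of diameter at most $r$ needed to cover $F$; $D(\mathbf z,R)$ is the closed disc of radius $R$ about $\mathbf z$. For $E\subset\mathbb{R}^2$ and $\theta\in(0,1)$, the Assouad spectrum is $\dim_A^\theta(E)=\inf\{\gamma>0:\exists C>0 \text{ s.t. } N(D(\mathbf z,R)\cap E,r)\le C(R/r)^\gamma \text{ for all } 0<r=R^{1/\theta}<R<1,\ \mathbf z\in E\}$. *)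

(* Defs.v *)
From Stdlib Require Import Reals List.
From Coquelicot Require Import Coquelicot.
Open Scope R_scope.

Definition pt := (R * R)%type.

Definition dist2 (x y : pt) : R :=
  sqrt ((fst x - fst y) ^ 2 + (snd x - snd y) ^ 2).

Definition diam_le (S : pt -> Prop) (r : R) : Prop :=
  forall x y, S x -> S y -> dist2 x y <= r.

Definition covered_by (F : pt -> Prop) (r : R) (n : nat) : Prop :=
  exists Ss : list (pt -> Prop),
    length Ss = n /\ (forall S, In S Ss -> diam_le S r) /\
    (forall x, F x -> exists S, In S Ss /\ S x).

(* N(F,r): least number of sets of diameter <= r covering F (p_infty if none) *)
Definition Ncov (F : pt -> Prop) (r : R) : Rbar :=
  Glb_Rbar (fun t => exists n : nat, covered_by F r n /\ t = INR n).

Definition disc (z : pt) (R0 : R) : pt -> Prop := fun x => dist2 x z <= R0.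

Definition assouad_exps (theta : R) (E : pt -> Prop) : R -> Prop :=
  fun gamma => gamma > 0 /\
    exists C : R, C > 0 /\
      forall (R0 : R) (z : pt), 0 < R0 < 1 -> E z ->
        Rbar_le (Ncov (fun x => disc z R0 x /\ E x) (Rpower R0 (1 / theta)))
                (C * Rpower (R0 / Rpower R0 (1 / theta)) gamma).

Definition assouad_spectrum (theta : R) (E : pt -> Prop) : Rbar :=
  Glb_Rbar (assouad_exps theta E).

Definition graph (I : R -> Prop) (f : R -> R) : pt -> Prop :=
  fun p => I (fst p) /\ snd p = f (fst p).

Definition cont_on_rel (I : R -> Prop) (f : R -> R) : Prop :=
  forall x, I x -> forall eps, eps > 0 -> exists delta, delta > 0 /\
    forall y, I y -> Rabs (y - x) < delta -> Rabs (f y - f x) < eps.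

Definition is_interval (I : R -> Prop) : Prop :=
  (exists a b, a < b /\ I a /\ I b) /\
  (forall x y z, I x -> I z -> x <= y <= z -> I y).

Definition Rbar_maxb (x y : Rbar) : Rbar := if Rbar_le_dec x y then y else x.

(* Main.v *)
Require Import Defs.
From Stdlib Require Import Reals Lra Lia List ClassicalEpsilon Classical ZArith.
From Coquelicot Require Import Coquelicot.
Import Defs.
Open Scope R_scope.

Lemma dist_ge_x x y : Rabs (fst x - fst y) <= dist2 x y.
Proof. unfold dist2. pose proof (sqrt_plus_sqr (fst x - fst y) (snd x - snd y)).
  pose proof (Rmax_l (Rabs (fst x - fst y)) (Rabs (snd x - snd y))). lra. Qed.
Lemma dist_ge_y x y : Rabs (snd x - snd y) <= dist2 x y.
Proof. unfold dist2. pose proof (sqrt_plus_sqr (fst x - fst y) (snd x - snd y)).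
  pose proof (Rmax_r (Rabs (fst x - fst y)) (Rabs (snd x - snd y))). lra. Qed.
Lemma dist_le x y : dist2 x y <= Rabs (fst x - fst y) + Rabs (snd x - snd y).
Proof. unfold dist2. set (a := fst x - fst y). set (b := snd x - snd y).
  rewrite <- (sqrt_pow2 (Rabs a + Rabs b)) by (pose proof (Rabs_pos a); pose proof (Rabs_pos b); lra).
  apply sqrt_le_1_alt. rewrite <- (pow2_abs a), <- (pow2_abs b).
  pose proof (Rabs_pos a); pose proof (Rabs_pos b). nra. Qed.

Lemma floor_nat (u : R) : 0 <= u -> exists n : nat, INR n <= u < INR n + 1.
Proof. intro Hu. destruct (base_Int_part u) as [H1 H2].
  assert (Hz : (0 <= Int_part u)%Z).
  { assert (IZR (-1) < IZR (Int_part u)) by (simpl; lra). apply lt_IZR in H. lia. }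
  exists (Z.to_nat (Int_part u)). rewrite INR_IZR_INZ, Z2Nat.id by lia. lra. Qed.

Lemma pigeon F r n K (P : nat -> pt) : covered_by F r n ->
  (forall m, (m < K)%nat -> F (P m)) ->
  (forall m m', (m < K)%nat -> (m' < K)%nat -> m <> m' -> dist2 (P m) (P m') > r) ->
  (K <= n)%nat.
Proof.
  intros [Ss [Hlen [Hdiam Hcov]]] HF Hfar.
  assert (H : forall p, exists i, F p -> (i < length Ss)%nat /\ nth i Ss (fun _ => False) p).
  { intro p. destruct (classic (F p)) as [Hp|Hp].
    - destruct (Hcov p Hp) as [S [HS HSp]]. destruct (In_nth _ _ (fun _ => False) HS) as [i [Hi Hni]].
      exists i. intros _. rewrite Hni. auto.
    - exists 0%nat. tauto. }
  set (idx := fun p => proj1_sig (constructive_indefinite_description _ (H p))).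
  assert (Hidx : forall p, F p -> (idx p < length Ss)%nat /\ nth (idx p) Ss (fun _ => False) p).
  { intro p. unfold idx. destruct (constructive_indefinite_description _ (H p)). simpl. auto. }
  assert (ND : NoDup (map (fun m => idx (P m)) (seq 0 K))).
  { apply NoDup_map_NoDup_ForallPairs; [|apply seq_NoDup].
    intros a b Ha Hb Heq. apply in_seq in Ha. apply in_seq in Hb.
    destruct (Nat.eq_dec a b) as [|Hne]; auto. exfalso.
    destruct (Hidx (P a)) as [Hia Hna]. apply HF; lia.
    destruct (Hidx (P b)) as [Hib Hnb]. apply HF; lia.
    rewrite Heq in Hna.
    assert (Hd := Hdiam _ (nth_In Ss (fun _ => False) Hib) _ _ Hna Hnb).
    specialize (Hfar a b ltac:(lia) ltac:(lia) Hne). lra. }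
  assert (Inc : incl (map (fun m => idx (P m)) (seq 0 K)) (seq 0 n)).
  { intros x Hx. apply in_map_iff in Hx. destruct Hx as [m [<- Hm]]. apply in_seq in Hm.
    apply in_seq. destruct (Hidx (P m)) as [Hi _]. apply HF; lia. lia. }
  pose proof (NoDup_incl_length ND Inc). rewrite length_map, !length_seq in H0. exact H0.
Qed.

Lemma r_facts R0 theta : 0 < theta < 1 -> 0 < R0 < 1 ->
  0 < Rpower R0 (1/theta) < R0.
Proof. intros Ht HR. unfold Rpower. split. apply exp_pos.
  assert (ln R0 < 0). { rewrite <- ln_1. apply ln_increasing; lra. }
  assert (1/theta > 1). { unfold Rdiv; rewrite Rmult_1_l; apply Rlt_gt; rewrite <- Rinv_1 at 1; apply Rinv_lt_contravar; nra. }
  rewrite <- (exp_ln R0) at 2 by lra. apply exp_increasing. nra. Qed.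

Lemma Ncov_le F r n : covered_by F r n -> Rbar_le (Ncov F r) (INR n).
Proof. intro H. apply (proj1 (Glb_Rbar_correct _)). exists n. auto. Qed.

Lemma mono_spec_le1 (I : R -> Prop) (F : R -> R) (sg theta : R) :
  (sg = 1 \/ sg = -1) ->
  (forall x y, I x -> I y -> x <= y -> sg * F x <= sg * F y) -> 0 < theta < 1 ->
  Rbar_le (assouad_spectrum theta (graph I F)) 1.
Proof.
  intros Hsg Hmono Ht. apply (proj1 (Glb_Rbar_correct _)). split; [lra|].
  exists 10. split; [lra|]. intros R0 z HR Hz.
  pose proof (r_facts R0 theta Ht HR) as Hr.
  set (r := Rpower R0 (1/theta)) in *.
  rewrite Rpower_1 by (apply Rdiv_lt_0_compat; lra).
  set (s := fun p : pt => fst p + sg * snd p).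
  set (s0 := s z).
  destruct (floor_nat (8 * R0 / r)) as [N' HN']. { apply Rlt_le, Rdiv_lt_0_compat; lra. }
  set (Sf := fun i : nat => fun p : pt => (disc z R0 p /\ graph I F p) /\
      s0 - 2*R0 + INR i * (r/2) <= s p <= s0 - 2*R0 + (INR i + 1)*(r/2)).
  assert (Hcov : covered_by (fun x => disc z R0 x /\ graph I F x) r (S N')).
  { exists (map Sf (seq 0 (S N'))). split; [rewrite length_map, length_seq; auto|]. split.
    - intros S HS. apply in_map_iff in HS. destruct HS as [i [<- _]].
      intros p q Hp Hq. unfold Sf in Hp, Hq. destruct Hp as [[_ [Ip Fp]] Sp]. destruct Hq as [[_ [Iq Fq]] Sq].
      assert (Hds : Rabs (s p - s q) <= r/2).
      { apply Rabs_le. lra. }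
      unfold s in Hds.
      eapply Rle_trans; [apply dist_le|].
      destruct (Rle_dec (fst p) (fst q)) as [Hpq|Hpq].
      + pose proof (Hmono _ _ Ip Iq Hpq). rewrite <- Fp, <- Fq in H.
        destruct Hsg; subst sg; rewrite Rabs_le_between in Hds;
        rewrite (Rabs_left1 (fst p - fst q)) by lra;
        destruct (Rle_dec 0 (snd p - snd q)); [rewrite (Rabs_right (snd p - snd q)) by lra|rewrite (Rabs_left1 (snd p - snd q)) by lra|rewrite (Rabs_right (snd p - snd q)) by lra|rewrite (Rabs_left1 (snd p - snd q)) by lra]; lra.
      + assert (Hqp : fst q <= fst p) by lra.
        pose proof (Hmono _ _ Iq Ip Hqp). rewrite <- Fp, <- Fq in H.
        destruct Hsg; subst sg; rewrite Rabs_le_between in Hds;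
        rewrite (Rabs_right (fst p - fst q)) by lra;
        destruct (Rle_dec 0 (snd p - snd q)); [rewrite (Rabs_right (snd p - snd q)) by lra|rewrite (Rabs_left1 (snd p - snd q)) by lra|rewrite (Rabs_right (snd p - snd q)) by lra|rewrite (Rabs_left1 (snd p - snd q)) by lra]; lra.
    - intros p Hp. destruct Hp as [Hd Hg].
      pose proof (dist_ge_x p z). pose proof (dist_ge_y p z). unfold disc in Hd.
      assert (Hsp : Rabs (s p - s0) <= 2 * R0).
      { unfold s0, s. apply Rabs_le.
        assert (Rabs (fst p - fst z) <= R0) by lra. assert (Rabs (snd p - snd z) <= R0) by lra.
        rewrite Rabs_le_between in H1, H2.
        destruct Hsg; subst sg; lra. }
      rewrite Rabs_le_between in Hsp.
      destruct (floor_nat ((s p - (s0 - 2*R0)) / (r/2))) as [i Hi].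
      { apply Rmult_le_pos; [lra|]. apply Rlt_le, Rinv_0_lt_compat. lra. }
      exists (Sf i). split.
      + apply in_map. apply in_seq. split; [lia|].
        assert (INR i < INR (S N')).
        { rewrite S_INR. apply Rle_lt_trans with ((s p - (s0 - 2 * R0)) / (r / 2)); [lra|].
          apply Rle_lt_trans with (8 * R0 / r); [|lra].
          unfold Rdiv. replace (8 * R0 * / r) with ((4*R0) * / (r/2)) by (field; lra).
          apply Rmult_le_compat_r; [apply Rlt_le, Rinv_0_lt_compat; lra|lra]. }
        apply INR_lt in H1. lia.
      + unfold Sf. split; [split; auto|].
        assert (Hr2 : 0 < r/2) by lra.
        destruct Hi as [Hi1 Hi2].
        apply (Rmult_le_compat_r (r/2)) in Hi1; [|lra].
        apply (Rmult_lt_compat_r (r/2)) in Hi2; [|lra].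
        replace ((s p - (s0 - 2 * R0)) / (r / 2) * (r / 2)) with (s p - (s0 - 2 * R0)) in Hi1, Hi2 by (field; lra).
        lra. }
  eapply Rbar_le_trans; [apply (Ncov_le _ _ _ Hcov)|]. change (INR (S N') <= 10 * (R0/r)). rewrite S_INR.
  idtac.
  assert (1 <= R0 / r). { apply Rle_trans with (R0 / R0). right; field; lra.
    unfold Rdiv. apply Rmult_le_compat_l; [lra|]. apply Rinv_le_contravar; lra. }
  assert (8 * R0 / r = 8 * (R0 / r)) by (field; lra). lra.
Qed.

Lemma PI_ge : 7/4 <= PI.
Proof. unfold PI. pose proof pi2_int. lra. Qed.

Lemma exp_le_mono x y : x <= y -> exp x <= exp y.
Proof. intro H. destruct (Req_dec x y). subst; lra. left; apply exp_increasing; lra. Qed.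

Lemma sin_lip x y : Rabs (sin x - sin y) <= Rabs (x - y).
Proof.
  destruct (MVT_abs sin cos y x) as [c [Hc _]].
  { intros c _. apply derivable_pt_lim_sin. }
  rewrite Hc. pose proof (COS_bound c). rewrite <- (Rmult_1_l (Rabs (x - y))) at 2.
  apply Rmult_le_compat_r. apply Rabs_pos. apply Rabs_le. lra.
Qed.

Lemma cpt_of_ex_derive (f : R -> R) x : ex_derive f x -> continuity_pt f x.
Proof. intro H. apply continuity_pt_filterlim. exact (ex_derive_continuous f x H). Qed.

Lemma cont_rel_of (I : R -> Prop) (f : R -> R) : continuity f -> cont_on_rel I f.
Proof.
  intros Hc x _ eps Heps. destruct (Hc x eps Heps) as [d [Hd Hd']].
  exists d. split; [lra|]. intros y _ Hy. destruct (Req_dec y x) as [->|Hne].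
  - rewrite Rminus_eq_0, Rabs_R0. lra.
  - apply (Hd' y). split; [split; [exact Logic.I|auto]|exact Hy].
Qed.

Lemma thr c v l : 0 < c -> Rabs (v / c) + 1 <= l -> v < c * l.
Proof. intros Hc Hl. replace v with (c * (v / c)) at 1 by (field; lra).
  pose proof (Rle_abs (v/c)). apply Rmult_lt_compat_l; lra. Qed.

Definition bet (theta : R) := (1 + theta) / 2.
Definition fA (theta t : R) := exp (- bet theta * t) * sin (exp t).
Definition LL (theta t : R) := exp t - exp (- bet theta * t).
Definition gg (theta t : R) := fA theta t + LL theta t.
Definition hh (theta t : R) := - LL theta t.
Definition II : R -> Prop := fun t => 0 <= t.

Lemma LL_mono theta x y : 0 < theta < 1 -> x <= y -> LL theta x <= LL theta y.
Proof. intros Ht Hxy. unfold LL, bet.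
  pose proof (exp_le_mono _ _ Hxy).
  assert (exp (- ((1 + theta) / 2) * y) <= exp (- ((1 + theta) / 2) * x)) by (apply exp_le_mono; nra).
  lra. Qed.

Lemma gg_mono theta x y : 0 < theta < 1 -> 0 <= x -> x <= y -> gg theta x <= gg theta y.
Proof. intros Ht Hx Hxy. unfold gg, LL, fA. set (b := bet theta).
  assert (Hb : 0 < b < 1) by (unfold b, bet; lra).
  pose proof (exp_le_mono _ _ Hxy).
  assert (Hay : exp (- b * y) <= exp (- b * x)) by (apply exp_le_mono; nra).
  assert (Hay1 : exp (- b * y) <= 1) by (rewrite <- exp_0; apply exp_le_mono; nra).
  pose proof (exp_pos (- b * y)).
  pose proof (sin_lip (exp y) (exp x)) as Hs.
  rewrite (Rabs_right (exp y - exp x)) in Hs by lra.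
  apply Rabs_le_between in Hs.
  pose proof (SIN_bound (exp x)).
  assert (exp (- b * y) * (sin (exp y) - sin (exp x)) >= - (exp y - exp x)).
  { assert (exp (- b * y) * (sin (exp y) - sin (exp x)) >= exp (- b * y) * (- (exp y - exp x))) by nra. nra. }
  assert ((exp (- b * y) - exp (- b * x)) * sin (exp x) >= - (exp (- b * x) - exp (- b * y))) by nra.
  nra. Qed.

Lemma cont_fA theta : continuity (fA theta).
Proof. intro x. apply cpt_of_ex_derive. unfold fA. auto_derive. auto. Qed.
Lemma cont_gg theta : continuity (gg theta).
Proof. intro x. apply cpt_of_ex_derive. unfold gg, fA, LL. auto_derive. auto. Qed.
Lemma cont_hh theta : continuity (hh theta).
Proof. intro x. apply cpt_of_ex_derive. unfold hh, LL. auto_derive. auto. Qed.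

Lemma ln_div' x y : 0 < x -> 0 < y -> ln (x / y) = ln x - ln y.
Proof. intros. unfold Rdiv. rewrite ln_mult, ln_Rinv; [ring|auto|auto|apply Rinv_0_lt_compat; auto]. Qed.

Lemma exp_minus' x y : exp (x - y) = exp x / exp y.
Proof. unfold Rminus, Rdiv. rewrite exp_plus, exp_Ropp. auto. Qed.

Lemma core theta F gam C (K0 : nat) X l :
  0 < theta < 1 -> (forall t, 0 <= t -> F t = fA theta t) -> 0 < gam -> 0 < C ->
  (forall R0 z, 0 < R0 < 1 -> graph II F z ->
     Rbar_le (Ncov (fun x => disc z R0 x /\ graph II F x) (Rpower R0 (1/theta)))
             (C * Rpower (R0 / Rpower R0 (1/theta)) gam)) ->
  (1 <= K0)%nat -> X = 2*PI*INR K0 - PI/2 -> l = ln X ->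
  0 <= l -> ln 4 < bet theta * l -> ln PI <= (1 - bet theta) * l ->
  ln 4 / theta + ln 4 <= (bet theta / theta - 1) * l ->
  (1 - bet theta + (bet theta / theta - bet theta) - gam * (bet theta / theta - bet theta)) * l
    < ln C + ln (4*PI) + ln 4 / theta.
Proof.
  intros Ht HF Hg HC Hbound HK0 HXd Hl H1 H2 H3 H4.
  set (b := bet theta) in *.
  assert (Hb : theta < b < 1) by (unfold b, bet; lra).
  pose proof PI_ge as Hpi.
  assert (HK : 1 <= INR K0) by (apply (le_INR 1) in HK0; simpl in HK0; lra).
  assert (HX : 1 <= X) by (subst X; nra).
  assert (eX : exp l = X) by (subst l; apply exp_ln; lra).
  set (E1 := 1 - b) in *. set (D := b / theta - b).
  set (a := exp (- b * l)).
  assert (Ha : 0 < a) by apply exp_pos.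
  assert (aE : a * X = exp (E1 * l)) by (unfold a, E1; rewrite <- eX, <- exp_plus; f_equal; ring).
  set (R0 := 4 * a).
  assert (lnR : ln R0 = ln 4 - b * l).
  { unfold R0, a. rewrite ln_mult, ln_exp; [ring|lra|apply exp_pos]. }
  assert (HR1 : R0 < 1).
  { rewrite <- (exp_ln R0) by (unfold R0; lra). rewrite lnR, <- exp_0. apply exp_increasing; lra. }
  assert (HR0 : 0 < R0) by (unfold R0; lra).
  set (r := Rpower R0 (1/theta)).
  assert (Hr : 0 < r < R0) by (apply r_facts; lra).
  assert (rE : r = exp (1/theta * (ln 4 - b * l))) by (unfold r, Rpower; rewrite lnR; auto).
  assert (rX : r * X <= /4).
  { rewrite rE, <- eX, <- exp_plus.
    replace (/4) with (exp (- ln 4)) by (rewrite exp_Ropp, exp_ln; lra). apply exp_le_mono.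
    replace (1 / theta * (ln 4 - b * l) + l) with ((ln 4 / theta + ln 4) - (b / theta - 1) * l - ln 4)
      by (field; lra). lra. }
  assert (EE : PI <= exp (E1 * l)) by (rewrite <- (exp_ln PI) by lra; apply exp_le_mono; exact H3).
  assert (EX : exp (E1 * l) <= X) by (rewrite <- eX; apply exp_le_mono; unfold E1; nra).
  set (u := exp (E1 * l) / PI - 1/2).
  assert (Hu1 : exp (E1 * l) / PI >= 1).
  { apply Rle_ge. apply (Rmult_le_reg_r PI); [lra|]. unfold Rdiv.
    rewrite Rmult_assoc, Rinv_l, Rmult_1_r by lra. lra. }
  destruct (floor_nat u) as [N HN]. { unfold u; lra. }
  assert (HNpi : 2*PI*INR N + PI <= 2 * exp (E1*l)).
  { assert (2*PI*u = 2*exp (E1*l) - PI) by (unfold u; field; lra).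
    assert (2*PI*INR N <= 2*PI*u) by (apply Rmult_le_compat_l; lra). lra. }
  set (H := a / 2).
  destruct (floor_nat (H / r)) as [J HJ].
  { unfold H. apply Rlt_le, Rdiv_lt_0_compat; lra. }
  assert (HJr : r * INR J <= H).
  { destruct HJ as [HJ _]. apply (Rmult_le_compat_l r) in HJ; [|lra].
    replace (r * (H / r)) with H in HJ by (field; lra). exact HJ. }
  set (ak := fun k : nat => ln (2*PI*INR (K0+k) - PI/2)).
  set (bk := fun k : nat => ln (2*PI*INR (K0+k) + PI/2)).
  assert (Qpos : forall k, X <= 2*PI*INR (K0+k) - PI/2).
  { intro k. rewrite plus_INR. pose proof (pos_INR k). subst X. nra. }
  assert (Fa : forall k, l <= ak k).
  { intro k. unfold ak. rewrite Hl. apply ln_le; [lra|apply Qpos]. }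
  assert (Fab : forall k, ak k <= bk k).
  { intro k. unfold ak, bk. apply ln_le; [pose proof (Qpos k); lra|lra]. }
  assert (Fb : forall k, (k <= N)%nat -> bk k <= l + 2 * a).
  { intros k Hk. set (w := (2*PI*INR N + PI) / X).
    assert (Hw : w <= 2 * a).
    { unfold w. apply (Rmult_le_reg_r X); [lra|]. unfold Rdiv.
      rewrite Rmult_assoc, Rinv_l, Rmult_1_r by lra. lra. }
    assert (Hle : 2*PI*INR (K0+k) + PI/2 <= X * exp w).
    { pose proof (exp_ineq1_le w).
      assert (X * (1 + w) = X + 2*PI*INR N + PI) by (unfold w; field; lra).
      apply le_INR in Hk. rewrite plus_INR. subst X. nra. }
    unfold bk. eapply Rle_trans. apply ln_le; [|exact Hle].
    pose proof (Qpos k); lra.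
    rewrite ln_mult, ln_exp, <- Hl by (try lra; apply exp_pos). lra. }
  assert (sa : forall k, sin (exp (ak k)) = -1).
  { intro k. unfold ak. rewrite exp_ln by (pose proof (Qpos k); lra).
    replace (2 * PI * INR (K0 + k) - PI / 2) with (- (PI/2) + 2 * INR (K0+k) * PI) by ring.
    rewrite sin_period, sin_neg, sin_PI2. try lra. }
  assert (sb : forall k, sin (exp (bk k)) = 1).
  { intro k. unfold bk. rewrite exp_ln by (pose proof (Qpos k); lra).
    replace (2 * PI * INR (K0 + k) + PI / 2) with (PI/2 + 2 * INR (K0+k) * PI) by ring.
    rewrite sin_period, sin_PI2. try lra. }
  assert (Amp : forall t, l <= t <= l + 2 * a -> H <= exp (- b * t)).
  { intros t Ht'. assert (exp (- b * t) >= exp (- b * l + - (2 * b * a))).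
    { apply Rle_ge, exp_le_mono. nra. }
    rewrite exp_plus in H0. fold a in H0. pose proof (exp_ineq1_le (- (2 * b * a))).
    unfold H. assert (b * a <= 1/4) by (unfold R0 in HR1; nra). nra. }
  assert (IVTex : forall k j, exists t, (k <= N)%nat -> (j <= J)%nat ->
            ak k <= t <= bk k /\ fA theta t = - H + 2 * r * INR j).
  { intros k j. destruct (le_dec k N) as [Hk|Hk]; [|exists 0; intros; lia].
    destruct (le_dec j J) as [Hj|Hj]; [|exists 0; intros; lia].
    set (y := - H + 2 * r * INR j).
    assert (Hy : - H <= y <= H).
    { unfold y. pose proof (pos_INR j). apply le_INR in Hj. split; nra. }
    assert (Hc : continuity (fun t => fA theta t - y)).
    { intro x. apply cpt_of_ex_derive. unfold fA. auto_derive. auto. }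
    destruct (IVT_cor _ _ _ Hc (Fab k)) as [t [Ht1 Ht2]].
    { unfold fA. fold b. rewrite sa, sb.
      assert (H <= exp (- b * ak k)) by (apply Amp; split; [apply Fa|pose proof (Fab k); pose proof (Fb k Hk); lra]).
      assert (H <= exp (- b * bk k)) by (apply Amp; split; [pose proof (Fa k); pose proof (Fab k); lra|apply Fb; auto]).
      nra. }
    exists t. intros _ _. split; [auto|lra]. }
  set (T := fun k j => proj1_sig (constructive_indefinite_description _ (IVTex k j))).
  assert (HT : forall k j, (k <= N)%nat -> (j <= J)%nat ->
            ak k <= T k j <= bk k /\ fA theta (T k j) = - H + 2 * r * INR j).
  { intros k j Hk Hj. unfold T. destruct (constructive_indefinite_description _ (IVTex k j)) as [t Ht'].
    simpl. auto. }
  assert (Gap : forall k, (S k <= N)%nat -> bk k + r < ak (S k)).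
  { intros k Hk. apply exp_lt_inv. rewrite exp_plus. unfold ak, bk.
    set (Q := 2 * PI * INR (K0 + k) + PI / 2).
    assert (HQ : 0 < Q) by (pose proof (Qpos k); unfold Q; lra).
    rewrite exp_ln by lra. rewrite exp_ln.
    2:{ pose proof (Qpos (S k)); lra. }
    rewrite Nat.add_succ_r, S_INR. fold Q.
    replace (2 * PI * (INR (K0 + k) + 1) - PI / 2) with (Q + PI) by (unfold Q; lra).
    assert (Hexp : exp r <= / (1 - r)).
    { pose proof (exp_ineq1_le (- r)). replace (exp r) with (/ exp (- r)) by (rewrite exp_Ropp, Rinv_inv; auto).
      apply Rinv_le_contravar; lra. }
    assert (HQ2 : Q + PI <= 3 * X).
    { apply le_INR in Hk. rewrite S_INR in Hk. unfold Q. rewrite plus_INR. subst X. nra. }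
    assert (Hlt : Q < (Q + PI) * (1 - r)) by nra.
    assert (Q * / (1 - r) < Q + PI).
    { apply (Rmult_lt_reg_r (1 - r)); [lra|]. rewrite Rmult_assoc, Rinv_l by lra. lra. }
    assert (Q * exp r <= Q * / (1 - r)) by (apply Rmult_le_compat_l; lra).
    lra. }
  set (P := fun m : nat => (T (m / S J)%nat (m mod S J)%nat, - H + 2 * r * INR (m mod S J)%nat)).
  set (K := (S N * S J)%nat).
  assert (Hidx : forall m, (m < K)%nat -> (m / S J <= N)%nat /\ (m mod S J <= J)%nat).
  { intros m Hm. split.
    - assert (m / S J < S N)%nat; [|lia]. apply Nat.Div0.div_lt_upper_bound. unfold K in Hm. lia.
    - pose proof (Nat.mod_upper_bound m (S J) ltac:(lia)). lia. }
  set (z := (l, F l)).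
  assert (Fl : F l = - a).
  { rewrite HF by lra. unfold fA. fold b. fold a.
    assert (ak 0%nat = l) by (unfold ak; rewrite Nat.add_0_r, Hl, HXd; auto).
    rewrite <- H0, sa. ring. }
  assert (Hmem : forall m, (m < K)%nat -> disc z R0 (P m) /\ graph II F (P m)).
  { intros m Hm. destruct (Hidx m Hm) as [Hk Hj].
    destruct (HT _ _ Hk Hj) as [[Ht1 Ht2] Hf].
    pose proof (Fa (m / S J)%nat). pose proof (Fb _ Hk).
    pose proof (pos_INR (m mod S J)). pose proof (le_INR _ _ Hj).
    split.
    - unfold disc. eapply Rle_trans; [apply dist_le|]. unfold P, z; cbn [fst snd].
      rewrite Fl.
      assert (r * INR (m mod S J) <= r * INR J) by (apply Rmult_le_compat_l; lra).
      assert (Rabs (T (m / S J)%nat (m mod S J)%nat - l) <= 2 * a) by (apply Rabs_le; lra).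
      assert (Rabs (- H + 2 * r * INR (m mod S J) - - a) <= 3 / 2 * a).
      { assert (0 <= r * INR (m mod S J)) by (apply Rmult_le_pos; lra). apply Rabs_le. unfold H in *. split; lra. }
      unfold R0. lra.
    - split; unfold P, II; cbn [fst snd]; [lra|]. rewrite HF by lra. lra. }
  assert (Hfar : forall m m', (m < K)%nat -> (m' < K)%nat -> m <> m' -> dist2 (P m) (P m') > r).
  { intros m m' Hm Hm' Hne.
    destruct (Hidx m Hm) as [Hk Hj]. destruct (Hidx m' Hm') as [Hk' Hj'].
    pose proof (Nat.div_mod_eq m (S J)). pose proof (Nat.div_mod_eq m' (S J)).
    destruct (Nat.eq_dec (m / S J) (m' / S J)) as [Ek|Ek].
    - assert (Ej : (m mod S J <> m' mod S J)%nat) by (intro; apply Hne; lia).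
      eapply Rlt_le_trans; [|apply dist_ge_y]. unfold P; cbn [fst snd].
      replace (- H + 2 * r * INR (m mod S J) - (- H + 2 * r * INR (m' mod S J)))
        with (2 * r * (INR (m mod S J) - INR (m' mod S J))) by ring.
      rewrite Rabs_mult, (Rabs_right (2 * r)) by lra.
      assert (1 <= Rabs (INR (m mod S J) - INR (m' mod S J))).
      { destruct (Nat.lt_total (m mod S J) (m' mod S J)) as [Hl'|[Hl'|Hl']]; [|lia|].
        - apply le_INR in Hl'. rewrite S_INR in Hl'. rewrite Rabs_left1 by lra. lra.
        - apply le_INR in Hl'. rewrite S_INR in Hl'. rewrite Rabs_right by lra. lra. }
      nra.
    - eapply Rlt_le_trans; [|apply dist_ge_x]. unfold P; cbn [fst snd].
      assert (key : forall k k' j j', (k < k')%nat -> (k' <= N)%nat -> (j <= J)%nat -> (j' <= J)%nat ->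
                 T k' j' - T k j > r).
      { intros k k' j j' Hkk Hk'N Hj1 Hj2.
        destruct (HT k j ltac:(lia) Hj1) as [[A1 A2] _].
        destruct (HT k' j' Hk'N Hj2) as [[B1 B2] _].
        pose proof (Gap k ltac:(lia)).
        assert (ak (S k) <= ak k').
        { unfold ak. apply ln_le. pose proof (Qpos (S k)); lra.
          apply le_INR in Hkk. rewrite !plus_INR. rewrite S_INR in *. nra. }
        lra. }
      destruct (Nat.lt_total (m / S J) (m' / S J)) as [Hl'|[Hl'|Hl']]; [|lia|].
      + pose proof (key _ _ _ _ Hl' Hk' Hj Hj'). rewrite Rabs_left1 by lra. lra.
      + pose proof (key _ _ _ _ Hl' Hk Hj' Hj). rewrite Rabs_right by lra. lra. }
  assert (HKle : Rbar_le (INR K) (Ncov (fun x => disc z R0 x /\ graph II F x) r)).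
  { apply (proj2 (Glb_Rbar_correct _)). intros x [n [Hcov ->]].
    change (INR K <= INR n). apply le_INR. apply (pigeon _ _ _ _ P Hcov); auto. }
  assert (Hz : graph II F z) by (split; simpl; auto).
  pose proof (Rbar_le_trans _ _ _ HKle (Hbound R0 z (conj HR0 HR1) Hz)) as Hfin.
  change (INR K <= C * Rpower (R0 / r) gam) in Hfin.
  unfold K in Hfin. rewrite mult_INR, !S_INR in Hfin.
  clear Hmem Hfar HKle Hidx P HT T IVTex Gap.
  set (p := exp (E1 * l) / (2 * PI)).
  set (q := H / r).
  assert (Hp : 0 < p) by (unfold p; apply Rdiv_lt_0_compat; [apply exp_pos|lra]).
  assert (Hq : 0 < q) by (unfold q, H; apply Rdiv_lt_0_compat; lra).
  assert (Hpu : p <= u) by (unfold p, u; unfold Rdiv in *; assert (exp (E1 * l) * / PI = 2 * (exp (E1 * l) * / (2 * PI))) by (field; lra); lra).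
  assert (Hpq : p * q < (INR N + 1) * (INR J + 1)).
  { fold q in HJ. apply Rmult_le_0_lt_compat; lra. }
  set (Lam := E1 * l + - b * l - 1 / theta * (ln 4 - b * l)).
  assert (Epq : p * q = exp (Lam - ln (4 * PI))).
  { unfold Lam. rewrite !exp_minus', exp_plus, exp_ln by lra. fold a. rewrite <- rE.
    unfold p, q, H. field. split; lra. }
  assert (lnr : ln r = 1 / theta * (ln 4 - b * l)) by (rewrite rE, ln_exp; auto).
  assert (Erp : C * Rpower (R0 / r) gam = exp (ln C + gam * ((ln 4 - b * l) - 1 / theta * (ln 4 - b * l)))).
  { unfold Rpower. rewrite ln_div' by lra. rewrite lnR, lnr, exp_plus, exp_ln by lra. auto. }
  assert (Hlt : Lam - ln (4 * PI) < ln C + gam * ((ln 4 - b * l) - 1 / theta * (ln 4 - b * l))).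
  { apply exp_lt_inv. rewrite <- Epq, <- Erp. lra. }
  assert (Hln4 : 0 < ln 4) by (rewrite <- ln_1; apply ln_increasing; lra).
  assert (Hth : 1 < 1 / theta).
  { unfold Rdiv; rewrite Rmult_1_l; rewrite <- Rinv_1 at 1; apply Rinv_lt_contravar; nra. }
  assert (Hneg : gam * (ln 4 * (1 - 1 / theta)) <= 0).
  { assert (ln 4 * (1 - 1 / theta) < 0) by nra. nra. }
  assert (E2 : gam * ((ln 4 - b * l) - 1 / theta * (ln 4 - b * l)) = gam * (ln 4 * (1 - 1 / theta)) + gam * (D * l))
    by (unfold D; field; lra).
  assert (E3 : Lam = E1 * l + D * l - ln 4 / theta) by (unfold Lam, D; field; lra).
  assert (E4 : (E1 + D - gam * D) * l = E1 * l + D * l - gam * (D * l)) by ring.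
  rewrite E4. rewrite E2, E3 in Hlt. lra.
Qed.

Lemma spec_lower theta F : 0 < theta < 1 -> (forall t, 0 <= t -> F t = fA theta t) ->
  Rbar_le (1 + (1 - bet theta) / (bet theta / theta - bet theta)) (assouad_spectrum theta (graph II F)).
Proof.
  intros Ht HF. apply (proj2 (Glb_Rbar_correct _)). intros gam [Hg [C [HC Hb]]].
  change (1 + (1 - bet theta) / (bet theta / theta - bet theta) <= gam).
  destruct (Rle_lt_dec (1 + (1 - bet theta) / (bet theta / theta - bet theta)) gam) as [Hle|Hlt]; auto.
  exfalso.
  set (b := bet theta) in *.
  assert (Hbb : theta < b < 1) by (unfold b, bet; lra).
  assert (Hb1 : 1 < b / theta).
  { apply (Rmult_lt_reg_r theta); [lra|]. unfold Rdiv. rewrite Rmult_assoc, Rinv_l by lra. lra. }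
  set (E1 := 1 - b) in *. set (D := b / theta - b) in *.
  assert (HD : 0 < D) by (unfold D; nra).
  set (e0 := E1 + D - gam * D).
  assert (He0 : 0 < e0).
  { unfold e0. assert (gam * D < (1 + E1 / D) * D) by (apply Rmult_lt_compat_r; lra).
    replace ((1 + E1 / D) * D) with (D + E1) in H by (field; lra). lra. }
  pose proof PI_ge as Hpi.
  set (Ls := Rabs (ln 4 / b) + Rabs (ln PI / E1) + Rabs ((ln 4 / theta + ln 4) / (b / theta - 1))
             + Rabs ((ln C + ln (4 * PI) + ln 4 / theta) / e0) + 1).
  pose proof (Rabs_pos (ln 4 / b)). pose proof (Rabs_pos (ln PI / E1)).
  pose proof (Rabs_pos ((ln 4 / theta + ln 4) / (b / theta - 1))).
  pose proof (Rabs_pos ((ln C + ln (4 * PI) + ln 4 / theta) / e0)).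
  destruct (floor_nat (exp Ls)) as [n Hn]. { pose proof (exp_pos Ls); lra. }
  set (X := 2 * PI * INR (S n) - PI / 2).
  assert (HX : exp Ls < X).
  { unfold X. rewrite S_INR. pose proof (pos_INR n).
    assert (0 <= (2*PI-1) * INR n) by (apply Rmult_le_pos; lra).
    assert (2 * PI * (INR n + 1) - PI / 2 = (2*PI-1) * INR n + (INR n + 1) + (3/2*PI - 1)) by field. lra. }
  set (l := ln X).
  assert (Hl : Ls < l).
  { unfold l. rewrite <- (ln_exp Ls). apply ln_increasing; [apply exp_pos|auto]. }
  assert (Hlt' := core theta F gam C (S n) X l Ht HF Hg HC Hb ltac:(lia) eq_refl eq_refl).
  assert (1 <= Ls) by (unfold Ls; lra).
  assert (Rabs (ln 4 / b) + 1 <= l) by (unfold Ls in Hl; lra).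
  assert (Rabs (ln PI / E1) + 1 <= l) by (unfold Ls in Hl; lra).
  assert (Rabs ((ln 4 / theta + ln 4) / (b / theta - 1)) + 1 <= l) by (unfold Ls in Hl; lra).
  assert (Rabs ((ln C + ln (4 * PI) + ln 4 / theta) / e0) + 1 <= l) by (unfold Ls in Hl; lra).
  clearbody Ls.
  assert (0 <= l) by lra.
  assert (ln 4 < b * l) by (apply thr; [lra|auto]).
  assert (ln PI <= E1 * l) by (left; apply thr; [unfold E1; lra|auto]).
  assert (ln 4 / theta + ln 4 <= (b / theta - 1) * l) by (left; apply thr; [lra|auto]).
  assert (ln C + ln (4 * PI) + ln 4 / theta < e0 * l) by (apply thr; [lra|auto]).
  specialize (Hlt' H8 H9 H10 H11). fold b E1 D e0 in Hlt'. fold b in Hlt'. lra.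
Qed.

Theorem corollary4p8 :
  forall theta : R, 0 < theta < 1 ->
    exists (I : R -> Prop) (g h : R -> R),
      is_interval I /\ cont_on_rel I g /\ cont_on_rel I h /\
      Rbar_lt (Rbar_maxb (assouad_spectrum theta (graph I g))
                        (assouad_spectrum theta (graph I h)))
              (assouad_spectrum theta (graph I (fun t => g t + h t))).
Proof.
  intros theta Ht. exists II, (gg theta), (hh theta).
  split; [|split; [apply cont_rel_of, cont_gg|split; [apply cont_rel_of, cont_hh|]]].
  - split. exists 0, 1. unfold II; lra. intros x y z Hx Hz Hxy. unfold II in *; lra.
  - assert (S1 : Rbar_le (assouad_spectrum theta (graph II (gg theta))) 1).
    { apply (mono_spec_le1 II (gg theta) 1 theta (or_introl eq_refl)); auto.
      intros x y Hx _ Hxy. rewrite !Rmult_1_l. apply gg_mono; auto. }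
    assert (S2 : Rbar_le (assouad_spectrum theta (graph II (hh theta))) 1).
    { apply (mono_spec_le1 II (hh theta) (-1) theta (or_intror eq_refl)); auto.
      intros x y _ _ Hxy. unfold hh. pose proof (LL_mono theta x y Ht Hxy). lra. }
    assert (S3 := spec_lower theta (fun t => gg theta t + hh theta t) Ht
                    ltac:(intros t _; unfold gg, hh; ring)).
    set (bv := 1 + (1 - bet theta) / (bet theta / theta - bet theta)) in S3.
    assert (Hbv : 1 < bv).
    { unfold bv, bet. assert (0 < (1 - (1 + theta) / 2) / ((1 + theta) / 2 / theta - (1 + theta) / 2)); [|lra].
      apply Rdiv_lt_0_compat. lra.
      assert (1 < (1 + theta) / 2 / theta).
      { apply (Rmult_lt_reg_r theta); [lra|]. unfold Rdiv. rewrite Rmult_assoc, Rinv_l by lra. lra. }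
      lra. }
    assert (Hmax : Rbar_le (Rbar_maxb (assouad_spectrum theta (graph II (gg theta)))
                        (assouad_spectrum theta (graph II (hh theta)))) 1).
    { unfold Rbar_maxb. destruct Rbar_le_dec; auto. }
    eapply Rbar_le_lt_trans; [exact Hmax|]. eapply Rbar_lt_le_trans; [|exact S3]. simpl. exact Hbv.
Qed.
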